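(* Let $\delta>1$, $\gamma>0$, $A_s,A_u>0$, $\rho_s,\rho_u>0$, $\lambda>0$, $\overline{L}_{BR}>0$ and $L_{other}\ge 0$. For $j\in\{s,u\}$ let $j^*(L)=\left[\gamma^{-\delta}A_j^{\delta-1}L\right]^{\frac{1}{1+\delta\rho_j}}$ for $L>0$. For $BR>0$ and $FS\in[0,BR]$ put $f=FS/BR$, $L(BR,FS)=\overline{L}_{BR}+\lambda(BR-FS)+L_{other}$, and define \[ G_j(BR,FS)=\frac{d j^*}{dL}\big(L(BR,FS)\big)\cdot\lambda(1-f),\qquad j\in\{s,u\}. \] Then $G_s(BR,FS)\ge 0$ and $G_u(BR,FS)\ge 0$, and for $FS$ in the interior $(0,BR)$, \[ \frac{\partial G_s}{\partial FS}(BR,FS)<0,\qquad \frac{\partial G_u}{\partial FS}(BR,FS)<0. \]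
   Context: Model of the legal labor market with forum shopping: $s^*(L),u^*(L)$ are the equilibrium employment levels of skilled and unskilled legal workers given demand for legal services $L$ (derived from labor supply $j=(w_j/\gamma)^{1/\rho_j}$ and marginal-product wages $w_j=A_j^{\frac{\delta-1}{\delta}}(L/j)^{1/\delta}$ of a CES firm with elasticity $\delta$). $BR$ measures local bankruptcies and $FS$ the part forum shopped (filed in a non-local court); $f=FS/BR$ is the forum-shopped share. The bankruptcy shock has magnitude $h(BR,f)=\lambda(1-f)BR=\lambda(BR-FS)$, and demand is $L=\overline{L}_{BR}+h+L_{other}$, where $\overline{L}_{BR}$ is the steady-state quantity of bankruptcy legal services and $L_{other}$ other legal services. The paper defines the effect of bankruptcies on employment as $\frac{\partial j}{\partial BR}=\frac{\partial j}{\partial L}\cdot\frac{\partial L}{\partial BR}$ with $\frac{\partial L}{\partial BR}=\lambda(1-f)$ (i.e. holding $f$ fixed); $G_j$ is this quantity, and the claim is that it is nonnegative and decreasing in forum shopping. *)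

(* Defs.v *)
From Stdlib Require Import Reals.
From Coquelicot Require Import Coquelicot.
Open Scope R_scope.

Definition jstar (delta gamma A rho L : R) : R :=
  Rpower (Rpower gamma (- delta) * Rpower A (delta - 1) * L) (1 / (1 + delta * rho)).

Definition Ldem (LbarBR lambda Lother BR FS : R) : R :=
  LbarBR + lambda * (BR - FS) + Lother.

Definition Gj (delta gamma A rho lambda LbarBR Lother BR FS : R) : R :=
  Derive (jstar delta gamma A rho) (Ldem LbarBR lambda Lother BR FS)
  * (lambda * (1 - FS / BR)).

(* Main.v *)
Require Import Defs.
From Stdlib Require Import Reals Lra.
From Coquelicot Require Import Coquelicot.
Open Scope R_scope.


Lemma jder delta gamma A rho L (Hd : 1 < delta) (Hg : 0 < gamma) (HA : 0 < A) (Hr : 0 < rho) (HL : 0 < L) :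
  let K := Rpower gamma (- delta) * Rpower A (delta - 1) in
  let e := 1 / (1 + delta * rho) in
  is_derive (jstar delta gamma A rho) L (e * K * exp ((e - 1) * ln (K * L))).
Proof.
  intros K e.
  assert (HK : 0 < K) by (unfold K, Rpower; apply Rmult_lt_0_compat; apply exp_pos).
  apply is_derive_ext_loc with (fun y => exp (e * ln (K * y))).
  - assert (He : 0 < L) by exact HL.
    exists (mkposreal L HL). intros y Hy.
    unfold jstar, Rpower. fold K e.
    change (Rabs (y - L) < L) in Hy. apply Rabs_def2 in Hy.
    reflexivity.
  - auto_derive. nra.
    replace ((e - 1) * ln (K * L)) with (e * ln (K * L) + - ln (K * L)) by ring.
    rewrite exp_plus, exp_Ropp, exp_ln by nra. field. repeat split; apply Rgt_not_eq; nra.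
Qed.

Lemma part delta gamma A rho lambda LbarBR Lother
  (Hd : 1 < delta) (Hg : 0 < gamma) (HA : 0 < A) (Hr : 0 < rho)
  (Hl : 0 < lambda) (HLbar : 0 < LbarBR) (HLo : 0 <= Lother) BR FS :
  0 < BR -> 0 <= FS <= BR ->
  0 <= Gj delta gamma A rho lambda LbarBR Lother BR FS /\
  (0 < FS < BR -> exists d, is_derive (fun x => Gj delta gamma A rho lambda LbarBR Lother BR x) FS d /\ d < 0).
Proof.
  intros HBR HFS.
  set (K := Rpower gamma (- delta) * Rpower A (delta - 1)).
  set (e := 1 / (1 + delta * rho)).
  assert (HK : 0 < K) by (unfold K, Rpower; apply Rmult_lt_0_compat; apply exp_pos).
  assert (He : 0 < e) by (unfold e; apply Rdiv_lt_0_compat; nra).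
  assert (He1 : e < 1) by (unfold e; apply (Rmult_lt_reg_r (1 + delta*rho)); [nra|];
     unfold Rdiv; rewrite Rmult_assoc, Rinv_l by nra; nra).
  assert (HDer : forall x, 0 < Ldem LbarBR lambda Lother BR x ->
     Derive (jstar delta gamma A rho) (Ldem LbarBR lambda Lother BR x)
       = e * K * exp ((e - 1) * ln (K * Ldem LbarBR lambda Lother BR x))).
  { intros x Hx. apply is_derive_unique. apply jder; auto. }
  assert (HL0 : 0 < Ldem LbarBR lambda Lother BR FS) by (unfold Ldem; nra).
  split.
  - unfold Gj. rewrite HDer by exact HL0.
    assert (FS / BR * BR = FS) by (field; lra).
    assert (0 < exp ((e - 1) * ln (K * Ldem LbarBR lambda Lother BR FS))) by apply exp_pos.
    apply Rmult_le_pos.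
    + apply Rmult_le_pos; [nra|lra].
    + apply Rmult_le_pos; nra.
  - intros [HF1 HF2].
    set (L0 := Ldem LbarBR lambda Lother BR FS) in *.
    set (E := exp ((e - 1) * ln (K * L0))).
    assert (HE : 0 < E) by apply exp_pos.
    exists ((e * K * lambda * E / (BR * L0)) * ((1 - e) * lambda * (BR - FS) - L0)).
    split.
    + apply is_derive_ext_loc with
        (fun x => e * K * exp ((e - 1) * ln (K * (LbarBR + lambda * (BR - x) + Lother))) * (lambda * (1 - x / BR))).
      * exists (mkposreal _ (proj2 (Rlt_0_minus _ _) HF2)). intros y Hy.
        change (Rabs (y - FS) < BR - FS) in Hy. apply Rabs_def2 in Hy.
        unfold Gj. rewrite HDer by (unfold Ldem; nra). reflexivity.
      * auto_derive. unfold L0, Ldem in *; nra.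
        change (LbarBR + lambda * (BR + - FS) + Lother) with L0. fold E.
        field. repeat split; apply Rgt_not_eq; nra.
    + assert (0 < e * K * lambda * E / (BR * L0)).
      { apply Rdiv_lt_0_compat; [|nra]. apply Rmult_lt_0_compat; [|exact HE]. apply Rmult_lt_0_compat; [|exact Hl]. apply Rmult_lt_0_compat; assumption. }
      assert (0 <= e * lambda * (BR - FS)) by (apply Rmult_le_pos; [apply Rmult_le_pos|]; lra).
      assert ((1 - e) * lambda * (BR - FS) < L0) by (unfold L0, Ldem; lra).
      nra.
Qed.

Theorem proposition3
  (delta gamma As Au rhos rhou lambda LbarBR Lother : R)
  (Hdelta : 1 < delta) (Hgamma : 0 < gamma) (HAs : 0 < As) (HAu : 0 < Au)
  (Hrhos : 0 < rhos) (Hrhou : 0 < rhou) (Hlambda : 0 < lambda)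
  (HLbar : 0 < LbarBR) (HLother : 0 <= Lother) :
  forall BR FS : R, 0 < BR -> 0 <= FS <= BR ->
    (0 <= Gj delta gamma As rhos lambda LbarBR Lother BR FS /\
     0 <= Gj delta gamma Au rhou lambda LbarBR Lother BR FS) /\
    (0 < FS < BR ->
       (exists d, is_derive (fun x => Gj delta gamma As rhos lambda LbarBR Lother BR x) FS d
                  /\ d < 0) /\
       (exists d, is_derive (fun x => Gj delta gamma Au rhou lambda LbarBR Lother BR x) FS d
                  /\ d < 0)).
Proof.
  intros BR FS HBR HFS.
  destruct (part delta gamma As rhos lambda LbarBR Lother Hdelta Hgamma HAs Hrhos Hlambda HLbar HLother BR FS HBR HFS) as [A1 A2].
  destruct (part delta gamma Au rhou lambda LbarBR Lother Hdelta Hgamma HAu Hrhou Hlambda HLbar HLother BR FS HBR HFS) as [B1 B2].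
  split; [split; assumption|]. intros H; split; auto.
Qed.
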